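(* Consider the setting described in the context, with value functions $U^o_t$, $t=0,\dots,T$. For every bound $B>0$ there exists a constant $K>0$ such that for all $t=0,\dots,T$ and all symmetric positive semidefinite $P,Q\in\mathbb{R}^{n\times n}$ with $\|P\|_F\le B$ and $\|Q\|_F\le B$, $$|U^o_t(P)-U^o_t(Q)|\le K\|P-Q\|_F.$$
   Context: Fix $T\in\mathbb{N}$, matrices $A_0,\dots,A_T\in\mathbb{R}^{n\times n}$, a symmetric positive definite $\mathcal W\in\mathbb{R}^{n\times n}$, and $N$ sensors: for $i\in\{1,\dots,N\}$ and $t=0,\dots,T$, matrices $C^i_t\in\mathbb{R}^{m_i\times n}$ and symmetric positive definite $\mathcal V^i\in\mathbb{R}^{m_i\times m_i}$. Let $R^i_t={C^i_t}^{\mathsf T}(\mathcal V^i)^{-1}C^i_t$ and $h_t(M)=A_{t-1}MA_{t-1}^{\mathsf T}+\mathcal W$. For a symmetric positive semidefinite $M$ and a positive semidefinite $R$ define the measurement update $\Phi(R,M)=M(I+RM)^{-1}$ (which equals $(M^{-1}+R)^{-1}$ when $M$ is invertible). For a relaxed schedule $\theta=\{\theta_k\}_{k=t}^T$ with each $\theta_k=(\theta^1_k,\dots,\theta^N_k)$ in the probability simplex ($\theta^i_k\in[0,1]$, $\sum_i\theta^i_k=1$), and initial prediction covariance $P_{t|t-1}=P$, define recursively $P_k=\Phi\big(\sum_{i=1}^N\theta^i_kR^i_k,\,P_{k|k-1}\big)$ and $P_{k+1|k}=h_{k+1}(P_k)$ for $k=t,\dots,T$. The relaxed value function is $U^o_t(P)=\min_{\theta}\sum_{k=t}^T\mathrm{tr}(P_k)$,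 the minimum over all such relaxed schedules from time $t$ to $T$. $\|\cdot\|_F$ is the Frobenius norm. *)

(* Defs.v *)
From HB Require Import structures.
From mathcomp Require Import all_boot all_order all_algebra.
From mathcomp Require Import classical_sets reals.
Set Implicit Arguments. Unset Strict Implicit. Unset Printing Implicit Defensive.
Import Order.TTheory GRing.Theory Num.Theory.
Local Open Scope ring_scope.
Local Open Scope classical_set_scope.

Section Defs.
Variable R : realType.

Definition psd n (M : 'M[R]_n) : Prop :=
  M^T = M /\ forall x : 'cV[R]_n, 0 <= (x^T *m M *m x) 0 0.

Definition posdef n (M : 'M[R]_n) : Prop :=
  M^T = M /\ forall x : 'cV[R]_n, x != 0 -> 0 < (x^T *m M *m x) 0 0.

Definition frob m n (M : 'M[R]_(m, n)) : R :=
  Num.sqrt (\sum_(i < m) \sum_(j < n) M i j ^+ 2).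

Definition Phi n (Rm M : 'M[R]_n) : 'M[R]_n := M *m invmx (1%:M + Rm *m M).

Definition Rmat n N (m : 'I_N -> nat) (C : forall i : 'I_N, nat -> 'M[R]_(m i, n))
  (V : forall i : 'I_N, 'M[R]_(m i)) (i : 'I_N) (t : nat) : 'M[R]_n :=
  (C i t)^T *m invmx (V i) *m C i t.

Definition hmap n (A : nat -> 'M[R]_n) (W : 'M[R]_n) (t : nat) (M : 'M[R]_n) :=
  A t.-1 *m M *m (A t.-1)^T + W.

Definition relaxed_schedule N (t T : nat) (theta : nat -> 'I_N -> R) : Prop :=
  forall k, (t <= k <= T)%N ->
    (forall i, 0 <= theta k i <= 1) /\ \sum_(i < N) theta k i = 1.

(* cost over s remaining steps starting at time k with prediction covariance M:
   sum of tr(P_j) for j = k .. k+s-1 *)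
Fixpoint relaxed_cost n N (m : 'I_N -> nat) (A : nat -> 'M[R]_n) (W : 'M[R]_n)
  (C : forall i : 'I_N, nat -> 'M[R]_(m i, n)) (V : forall i : 'I_N, 'M[R]_(m i))
  (theta : nat -> 'I_N -> R) (s k : nat) (M : 'M[R]_n) : R :=
  match s with
  | 0 => 0
  | s'.+1 =>
      let Pk := Phi (\sum_(i < N) theta k i *: Rmat C V i k) M in
      \tr Pk + relaxed_cost A W C V theta s' k.+1 (hmap A W k.+1 Pk)
  end.

(* relaxed value function U^o_t(P) (minimum realized as infimum) *)
Definition Uo n N (m : 'I_N -> nat) (A : nat -> 'M[R]_n) (W : 'M[R]_n)
  (C : forall i : 'I_N, nat -> 'M[R]_(m i, n)) (V : forall i : 'I_N, 'M[R]_(m i))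
  (T t : nat) (P : 'M[R]_n) : R :=
  inf [set c | exists theta, relaxed_schedule t T theta /\
                 c = relaxed_cost A W C V theta (T.+1 - t) t P].
End Defs.

(* Main.v *)
Require Import Defs.
From HB Require Import structures.
From mathcomp Require Import all_boot all_order all_algebra.
From mathcomp Require Import classical_sets reals.
From mathcomp Require Import ring lra boolp.
Import Order.TTheory GRing.Theory Num.Theory.
Local Open Scope ring_scope.
Set Implicit Arguments. Unset Strict Implicit. Unset Printing Implicit Defensive.

Section Aux.
Variable R : realType.

Definition Sn m p (M : 'M[R]_(m,p)) : R := \sum_i \sum_j `|M i j|.

Lemma Sn_ge0 m p (M : 'M[R]_(m,p)) : 0 <= Sn M.
Proof. by apply: sumr_ge0 => i _; apply: sumr_ge0 => j _. Qed.

Lemma SnD m p (A B : 'M[R]_(m,p)) : Sn (A + B) <= Sn A + Sn B.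
Proof.
rewrite /Sn -big_split /=; apply: ler_sum => i _.
rewrite -big_split /=; apply: ler_sum => j _; rewrite mxE; exact: ler_normD.
Qed.

Lemma SnN m p (A : 'M[R]_(m,p)) : Sn (- A) = Sn A.
Proof. by apply: eq_bigr => i _; apply: eq_bigr => j _; rewrite mxE normrN. Qed.

Lemma SnB m p (A B : 'M[R]_(m,p)) : Sn (A - B) = Sn (B - A).
Proof. by rewrite -SnN opprB. Qed.

Lemma SnZ m p c (A : 'M[R]_(m,p)) : Sn (c *: A) = `|c| * Sn A.
Proof.
rewrite /Sn mulr_sumr; apply: eq_bigr => i _; rewrite mulr_sumr.
by apply: eq_bigr => j _; rewrite mxE normrM.
Qed.

Lemma Sn_tr m p (A : 'M[R]_(m,p)) : Sn A^T = Sn A.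
Proof.
rewrite /Sn exchange_big; apply: eq_bigr => i _; apply: eq_bigr => j _.
by rewrite mxE.
Qed.

Lemma Sn_row_le m p (A : 'M[R]_(m,p)) k : \sum_j `|A k j| <= Sn A.
Proof.
rewrite /Sn (bigD1 k) //= lerDl; apply: sumr_ge0 => i _; exact: sumr_ge0.
Qed.

Lemma Sn_entry m p (A : 'M[R]_(m,p)) i j : `|A i j| <= Sn A.
Proof.
apply: le_trans (Sn_row_le A i); rewrite (bigD1 j) //= lerDl.
by apply: sumr_ge0.
Qed.

Lemma SnM m p q (A : 'M[R]_(m,p)) (B : 'M[R]_(p,q)) : Sn (A *m B) <= Sn A * Sn B.
Proof.
rewrite /Sn mulr_suml; apply: ler_sum => i _.
apply: (@le_trans _ _ (\sum_j \sum_k `|A i k| * `|B k j|)).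
  apply: ler_sum => j _; rewrite mxE; apply: le_trans (ler_norm_sum _ _ _) _.
  by apply: ler_sum => k _; rewrite normrM.
rewrite exchange_big /= mulr_suml; apply: ler_sum => k _.
rewrite -mulr_sumr; apply: ler_wpM2l => //; exact: Sn_row_le.
Qed.

Lemma Sn_sum m p I (r : seq I) (P : pred I) (F : I -> 'M[R]_(m,p)) :
  Sn (\sum_(i <- r | P i) F i) <= \sum_(i <- r | P i) Sn (F i).
Proof.
elim/big_rec2: _ => [|i y M _ IH]; first by rewrite /Sn big1 // => i _; rewrite big1 // => j _; rewrite mxE normr0.
by apply: le_trans (SnD _ _) _; rewrite lerD2l.
Qed.

Lemma Sn1 n : Sn (1%:M : 'M[R]_n) = n%:R.
Proof.
rewrite /Sn (eq_bigr (fun _ => 1)) ?sumr_const ?card_ord // => i _.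
rewrite (bigD1 i) //= big1 => [|j Hj]; rewrite !mxE ?eqxx ?normr1 ?addr0 //.
by rewrite eq_sym (negbTE Hj) normr0.
Qed.

Lemma tr_le_Sn n (A : 'M[R]_n) : `|\tr A| <= Sn A.
Proof.
rewrite /mxtrace; apply: le_trans (ler_norm_sum _ _ _) _.
by apply: ler_sum => i _; rewrite (bigD1 i) //= lerDl; apply: sumr_ge0.
Qed.

Lemma entry_le_frob m p (A : 'M[R]_(m,p)) i j : `|A i j| <= frob A.
Proof.
rewrite /frob -sqrtr_sqr; apply: ler_wsqrtr.
rewrite (bigD1 i) //= (bigD1 j) //= -addrA lerDl addr_ge0 //.
  by apply: sumr_ge0 => k _; apply: sqr_ge0.
by apply: sumr_ge0 => k _; apply: sumr_ge0 => l _; apply: sqr_ge0.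
Qed.

Lemma Sn_le_frob m p (A : 'M[R]_(m,p)) : Sn A <= (m * p)%:R * frob A.
Proof.
rewrite /Sn (@le_trans _ _ (\sum_(i < m) \sum_(j < p) frob A)) //.
  by apply: ler_sum => i _; apply: ler_sum => j _; apply: entry_le_frob.
rewrite (eq_bigr (fun _ => frob A *+ p)) => [|i _]; last by rewrite sumr_const card_ord.
by rewrite sumr_const card_ord -mulrnA mulr_natl mulnC.
Qed.


Definition qf n (X : 'M[R]_n) (x : 'cV[R]_n) : R := (x^T *m X *m x) 0 0.

Lemma qf_delta n (X : 'M[R]_n) (i j : 'I_n) :
  ((delta_mx i 0 : 'cV[R]_n)^T *m X *m (delta_mx j 0 : 'cV[R]_n)) 0 0 = X i j.
Proof. by rewrite trmx_delta -rowE -colE !mxE. Qed.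

Lemma bil_sym n (X : 'M[R]_n) (u v : 'cV[R]_n) : X^T = X ->
  (u^T *m X *m v) 0 0 = (v^T *m X *m u) 0 0.
Proof.
move=> HX; rewrite -[in LHS](trmxK (u^T *m X *m v)) mxE.
by rewrite !trmx_mul trmxK HX mulmxA.
Qed.

Lemma qf_add n (X : 'M[R]_n) (u v : 'cV[R]_n) c : X^T = X ->
  qf X (u + c *: v) = qf X u + c ^+ 2 * qf X v + 2 * c * (u^T *m X *m v) 0 0.
Proof.
move=> HX; rewrite /qf !linearD /= !mulmxDl !linearZ /= -!scalemxAl !scalemxAr.
have E : v^T *m X *m u = (u^T *m X *m v)^T by rewrite !trmx_mul trmxK HX mulmxA.
rewrite -!scalemxAr scalerA E.
set a := u^T *m X *m u; set b := u^T *m X *m v; set d := v^T *m X *m v.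
rewrite !mxE; ring.
Qed.

Lemma psd_diag n (X : 'M[R]_n) i : psd X -> 0 <= X i i.
Proof. by case=> _ H; rewrite -qf_delta; apply: H. Qed.

Lemma psd_off n (X : 'M[R]_n) i j : psd X -> 2 * `|X i j| <= X i i + X j j.
Proof.
case=> HS H.
have h1 := H ((delta_mx i 0 : 'cV[R]_n) + 1 *: (delta_mx j 0 : 'cV[R]_n)).
have h2 := H ((delta_mx i 0 : 'cV[R]_n) + (-1) *: (delta_mx j 0 : 'cV[R]_n)).
move: h1 h2; rewrite -/(qf _ _) -/(qf _ _) !qf_add // /qf !qf_delta => h1 h2.
case: (lerP 0 (X i j)) => h; [rewrite ger0_norm // | rewrite ltr0_norm //]; lra.
Qed.

Lemma psd_tr_ge0 n (X : 'M[R]_n) : psd X -> 0 <= \tr X.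
Proof. by move=> HX; apply: sumr_ge0 => i _; apply: psd_diag. Qed.

Lemma Sn_psd n (X : 'M[R]_n) : psd X -> Sn X <= n%:R * \tr X.
Proof.
move=> HX.
have H2 : 2 * Sn X <= \sum_(i < n) \sum_(j < n) (X i i + X j j).
  rewrite /Sn mulr_sumr; apply: ler_sum => i _; rewrite mulr_sumr.
  by apply: ler_sum => j _; apply: psd_off.
have E : \sum_(i < n) \sum_(j < n) (X i i + X j j) = 2 * (n%:R * \tr X).
  rewrite (eq_bigr (fun i => X i i * n%:R + \tr X)) => [|i _]; last first.
    by rewrite big_split /= sumr_const card_ord mulr_natr.
  rewrite big_split /= -mulr_suml sumr_const card_ord -/(mxtrace X).
  rewrite -mulr_natl; ring.
rewrite E in H2; lra.
Qed.

Lemma psd_tr_mono n (P Q : 'M[R]_n) : psd (Q - P) -> \tr P <= \tr Q.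
Proof. by move=> H; rewrite -subr_ge0 -raddfB; apply: psd_tr_ge0. Qed.

Lemma cv_eq0 n (v : 'cV[R]_n) : (v^T *m v) 0 0 = 0 -> v = 0.
Proof.
rewrite mxE => /psumr_eq0P H; apply/matrixP => i j.
have H' : v^T 0 i * v i 0 = 0 by apply: H => // k _; rewrite mxE -expr2 sqr_ge0.
rewrite (ord1 j) !mxE; move: H'; rewrite mxE => /eqP.
by rewrite mulf_eq0 orbb => /eqP.
Qed.

Lemma cv_ge0 n (v : 'cV[R]_n) : 0 <= (v^T *m v) 0 0.
Proof. by rewrite mxE; apply: sumr_ge0 => i _; rewrite mxE -expr2 sqr_ge0. Qed.

Lemma real_aux (a q : R) : 0 <= a -> 0 <= q ->
  (forall t, 0 <= t ^+ 2 * q + 2 * t * a) -> a = 0.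
Proof.
move=> a0 q0 key.
have d0 : 0 < q + 1 by lra.
have := key (- a / (q + 1)).
have -> : (- a / (q + 1)) ^+ 2 * q + 2 * (- a / (q + 1)) * a
   = - (a ^+ 2 * (q + 2)) / (q + 1) ^+ 2.
  by field; rewrite gt_eqF.
rewrite pmulr_lge0 ?invr_gt0 ?exprn_gt0 // oppr_ge0 => H.
have : 0 < q + 2 by lra.
nra.
Qed.

Lemma psd_kernel n (X : 'M[R]_n) x : psd X -> qf X x = 0 -> X *m x = 0.
Proof.
move=> [HS HP] Hq; set v := X *m x.
set a := (v^T *m v) 0 0.
have Ha : (x^T *m X *m v) 0 0 = a.
  by rewrite bil_sym // /a /v mulmxA.
have a0 : 0 <= a by apply: cv_ge0.
set q := qf X v.
have q0 : 0 <= q by apply: HP.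
have key : forall t, 0 <= t ^+ 2 * q + 2 * t * a.
  move=> t; have := HP (x + t *: v); rewrite -/(qf _ _) qf_add // Hq Ha -/q; lra.
apply: cv_eq0; exact: real_aux a0 q0 key.
Qed.

Lemma psd_add n (X Y : 'M[R]_n) : psd X -> psd Y -> psd (X + Y).
Proof.
move=> [HX PX] [HY PY]; split; first by rewrite linearD /= HX HY.
by move=> x; rewrite mulmxDr mulmxDl mxE addr_ge0.
Qed.

Lemma psd0 n : psd (0 : 'M[R]_n).
Proof. by split; [rewrite trmx0 | move=> x; rewrite mulmx0 mul0mx mxE]. Qed.

Lemma psd_scale n c (X : 'M[R]_n) : 0 <= c -> psd X -> psd (c *: X).
Proof.
move=> c0 [HX PX]; split; first by rewrite linearZ /= HX.
by move=> x; rewrite -scalemxAr -scalemxAl mxE mulr_ge0.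
Qed.

Lemma psd_sum n I (r : seq I) (P : pred I) (F : I -> 'M[R]_n) :
  (forall i, P i -> psd (F i)) -> psd (\sum_(i <- r | P i) F i).
Proof.
move=> H; elim/big_ind: _ => //; [exact: psd0 | exact: psd_add].
Qed.

Lemma psd_cong n p (B : 'M[R]_(n, p)) (X : 'M[R]_p) : psd X -> psd (B *m X *m B^T).
Proof.
move=> [HX PX]; split; first by rewrite !trmx_mul trmxK HX mulmxA.
move=> x; have := PX (B^T *m x).
by rewrite trmx_mul trmxK !mulmxA.
Qed.

Lemma posdef_psd n (X : 'M[R]_n) : posdef X -> psd X.
Proof.
move=> [HX PX]; split => // x; case: (eqVneq x 0) => [->|/PX/ltW //].
by rewrite mulmx0 mxE.
Qed.

Lemma psd_inv n (X : 'M[R]_n) : psd X -> psd (invmx X).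
Proof.
move=> HP; case: (boolP (X \in unitmx)) => U; last by rewrite /invmx (negbTE U).
case: HP => [HX PX].
have S : (invmx X)^T = invmx X by rewrite trmx_inv HX.
split => // x; have := PX (invmx X *m x).
by rewrite trmx_mul S !mulmxA mulmxKV.
Qed.

Lemma IRM_col n (Rm M : 'M[R]_n) (x : 'cV[R]_n) : psd Rm -> psd M ->
  (1%:M + Rm *m M) *m x = 0 -> x = 0.
Proof.
move=> HR HM H.
have Ex : x = - (Rm *m (M *m x)).
  by apply/eqP; rewrite -addr_eq0 mulmxA; move: H; rewrite mulmxDl mul1mx => ->.
have q0 : qf M x = 0.
  apply/eqP; rewrite eq_le; apply/andP; split; last by case: HM => _; apply.
  rewrite /qf -mulmxA {1}Ex linearN /= trmx_mul mulNmx mxE oppr_le0.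
  case: HR => [HRs PR]; rewrite HRs -mulmxA mulmxA; exact: PR.
by rewrite Ex (psd_kernel HM q0) mulmx0 oppr0.
Qed.

Lemma IRM_unit n (Rm M : 'M[R]_n) : psd Rm -> psd M -> (1%:M + Rm *m M) \in unitmx.
Proof.
move=> HR HM; rewrite -unitmx_tr -row_free_unit; apply: inj_row_free => v Hv.
have : (1%:M + Rm *m M) *m v^T = 0 by rewrite -(trmxK (_ *m v^T)) trmx_mul trmxK Hv trmx0.
move/(IRM_col HR HM) => H; by rewrite -(trmxK v) H trmx0.
Qed.

Section PhiLemmas.
Variables (n : nat) (Rm M : 'M[R]_n).
Hypotheses (HR : psd Rm) (HM : psd M).

Let A := 1%:M + Rm *m M.
Let uA : A \in unitmx := IRM_unit HR HM.

Lemma Phi_G : invmx A = 1%:M - Rm *m Phi Rm M.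
Proof.
apply/eqP; rewrite eq_sym subr_eq /Phi -/A mulmxA -{1}[invmx A]mul1mx -mulmxDl.
by rewrite -/A mulmxV.
Qed.

Lemma AT : A^T = 1%:M + M *m Rm.
Proof. by case: HR => HRs _; case: HM => HMs _; rewrite /A linearD /= trmx1 trmx_mul HRs HMs. Qed.

Lemma uAT : A^T \in unitmx.
Proof. by rewrite unitmx_tr. Qed.

Lemma Phi_alt : Phi Rm M = invmx A^T *m M.
Proof.
rewrite /Phi -/A -{1}(mulKmx uAT M) AT -/A.
have -> : (1%:M + M *m Rm) *m M = M *m A by rewrite /A mulmxDl mulmxDr mul1mx mulmx1 mulmxA.
by rewrite -AT -mulmxA mulmxK.
Qed.

Lemma Phi_sym : (Phi Rm M)^T = Phi Rm M.
Proof.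
case: HM => HMs _; rewrite {2}Phi_alt /Phi trmx_mul trmx_inv HMs.
by [].
Qed.

Lemma Phi_E1 : Phi Rm M + Phi Rm M *m Rm *m M = M.
Proof.
by rewrite -mulmxA -{1}[Phi Rm M]mulmx1 -mulmxDr -/A /Phi -/A mulmxKV.
Qed.

Lemma Phi_E2 : Phi Rm M + M *m Rm *m Phi Rm M = M.
Proof.
rewrite -{1}[Phi Rm M]mul1mx -mulmxDl -AT Phi_alt mulKVmx //; exact: uAT.
Qed.

Lemma Phi_psd : psd (Phi Rm M).
Proof.
have E : Phi Rm M = (invmx A)^T *m M *m (invmx A)^T^T + Phi Rm M *m Rm *m (Phi Rm M)^T.
  rewrite trmxK Phi_sym trmx_inv -Phi_alt Phi_G mulmxBr mulmx1 mulmxA.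
  by rewrite subrK.
rewrite E; apply: psd_add; exact: psd_cong.
Qed.

Lemma Phi_le : psd (M - Phi Rm M).
Proof.
case: HR => HRs _.
have E : M - Phi Rm M = Phi Rm M *m Rm *m (Phi Rm M)^T
   + (Phi Rm M *m Rm) *m M *m (Phi Rm M *m Rm)^T.
  rewrite (trmx_mul (Phi Rm M) Rm) HRs Phi_sym.
  have E1 := Phi_E1; have E2 := Phi_E2.
  set P := Phi Rm M in E1 E2 *.
  have -> : P *m Rm *m M *m (Rm *m P) = P *m Rm *m (M *m Rm *m P) by rewrite !mulmxA.
  rewrite -mulmxDr E2 -{1}E1.
  by rewrite addrC addKr.
rewrite E; apply: psd_add; exact: psd_cong.
Qed.
End PhiLemmas.

Lemma Phi_diff n (Rm P Q : 'M[R]_n) : psd Rm -> psd P -> psd Q ->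
  Phi Rm P - Phi Rm Q =
  (invmx (1%:M + Rm *m P))^T *m (P - Q) *m invmx (1%:M + Rm *m Q).
Proof.
move=> HR HP HQ.
have uQ := IRM_unit HR HQ; have uPT := uAT HR HP.
have D : P *m (1%:M + Rm *m Q) - (1%:M + Rm *m P)^T *m Q = P - Q.
  rewrite (AT HR HP) mulmxDr mulmxDl mulmx1 mul1mx mulmxA opprD addrACA.
  by rewrite subrr addr0.
rewrite -D mulmxBr mulmxBl !mulmxA mulmxK // trmx_inv -(Phi_alt HR HP).
by rewrite mulVmx // mul1mx.
Qed.

Lemma Sn_Phi n (Rm M : 'M[R]_n) : psd Rm -> psd M -> Sn (Phi Rm M) <= n%:R * Sn M.
Proof.
move=> HR HM; apply: le_trans (Sn_psd (Phi_psd HR HM)) _.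
apply: ler_wpM2l => //; apply: le_trans (psd_tr_mono (Phi_le HR HM)) _.
exact: le_trans (ler_norm _) (tr_le_Sn _).
Qed.

Lemma Sn_G n (Rm M : 'M[R]_n) : psd Rm -> psd M ->
  Sn (invmx (1%:M + Rm *m M)) <= n%:R + Sn Rm * (n%:R * Sn M).
Proof.
move=> HR HM; rewrite (Phi_G HR HM); apply: le_trans (SnD _ _) _.
rewrite SnN Sn1 lerD2l; apply: le_trans (SnM _ _) _.
by apply: ler_wpM2l; [exact: Sn_ge0 | exact: Sn_Phi].
Qed.

Section Cost.
Variables (n N : nat) (m : 'I_N -> nat) (A : nat -> 'M[R]_n) (W : 'M[R]_n)
  (C : forall i : 'I_N, nat -> 'M[R]_(m i, n)) (V : forall i : 'I_N, 'M[R]_(m i)).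
Hypothesis HW : psd W.
Variables (al rho : R).
Hypotheses (al0 : 0 <= al) (rho0 : 0 <= rho).

Definition Rsum (theta : nat -> 'I_N -> R) k := \sum_(i < N) theta k i *: Rmat C V i k.

Definition good theta s k := forall j, (k <= j < k + s)%N ->
  [/\ psd (Rsum theta j), Sn (Rsum theta j) <= rho & Sn (A j) <= al].

Lemma cost_lip s : forall b, 0 <= b -> exists L, 0 <= L /\
  forall k theta, good theta s k ->
  forall P Q, psd P -> psd Q -> Sn P <= b -> Sn Q <= b ->
  `|relaxed_cost A W C V theta s k P - relaxed_cost A W C V theta s k Q|
     <= L * Sn (P - Q).
Proof.
elim: s => [|s IH] b b0.
  by exists 0; split => // k theta _ P Q _ _ _ _ /=; rewrite subrr normr0 mul0r.
set b' := al * (n%:R * b) * al + Sn W.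
have b'0 : 0 <= b' by rewrite addr_ge0 ?Sn_ge0 // !mulr_ge0.
have [L' [L'0 HL']] := IH b' b'0.
set g := n%:R + rho * (n%:R * b).
have g0 : 0 <= g by rewrite addr_ge0 // !mulr_ge0.
exists ((1 + L' * (al * al)) * (g * g)); split.
  by rewrite !mulr_ge0 // addr_ge0 // mulr_ge0 // mulr_ge0.
move=> k theta Hg P Q HP HQ SP SQ /=.
have Hk : (k <= k < k + s.+1)%N by rewrite leqnn /= addnS ltnS leq_addr.
have [psdR SR SA] := Hg k Hk.
set RR := Rsum theta k in psdR SR *.
rewrite -/(Rsum theta k) -/RR.
have good' : good theta s k.+1.
  move=> j /andP [h1 h2]; apply: Hg; rewrite (ltnW h1) /=.
  by rewrite addSn -addnS in h2.
have pP := Phi_psd psdR HP; have pQ := Phi_psd psdR HQ.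
set PP := Phi RR P in pP *; set QQ := Phi RR Q in pQ *.
have SPP : Sn PP <= n%:R * b by apply: le_trans (Sn_Phi psdR HP) _; apply: ler_wpM2l.
have SQQ : Sn QQ <= n%:R * b by apply: le_trans (Sn_Phi psdR HQ) _; apply: ler_wpM2l.
have hpsd : forall X, psd X -> psd (hmap A W k.+1 X).
  by move=> X HX; rewrite /hmap /=; apply: psd_add => //; apply: psd_cong.
have hS : forall X, Sn X <= n%:R * b -> Sn (hmap A W k.+1 X) <= b'.
  move=> X HX; rewrite /hmap /=; apply: le_trans (SnD _ _) _; rewrite lerD2r.
  apply: le_trans (SnM _ _) _; rewrite Sn_tr.
  apply: ler_pM; [exact: Sn_ge0|exact: Sn_ge0| |exact: SA].
  apply: le_trans (SnM _ _) _; apply: ler_pM; [exact: Sn_ge0|exact: Sn_ge0|exact: SA|exact: HX].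
have hD : hmap A W k.+1 PP - hmap A W k.+1 QQ = A k *m (PP - QQ) *m (A k)^T.
  by rewrite /hmap /= opprD addrACA subrr addr0 -mulmxBl -mulmxBr.
have IH1 := HL' _ _ good' _ _ (hpsd _ pP) (hpsd _ pQ) (hS _ SPP) (hS _ SQQ).
rewrite hD in IH1.
have Sh : Sn (A k *m (PP - QQ) *m (A k)^T) <= al * Sn (PP - QQ) * al.
  apply: le_trans (SnM _ _) _; rewrite Sn_tr.
  apply: ler_pM; [exact: Sn_ge0|exact: Sn_ge0| |exact: SA].
  apply: le_trans (SnM _ _) _; apply: ler_pM; [exact: Sn_ge0|exact: Sn_ge0|exact: SA|exact: le_refl].
have Gb : forall X, psd X -> Sn X <= b -> Sn (invmx (1%:M + RR *m X)) <= g.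
  move=> X HX SX; apply: le_trans (Sn_G psdR HX) _; rewrite lerD2l.
  apply: ler_pM => //; [exact: Sn_ge0 | exact: mulr_ge0 (Sn_ge0 _) | exact: ler_wpM2l].
have SD : Sn (PP - QQ) <= g * Sn (P - Q) * g.
  rewrite /PP /QQ (Phi_diff psdR HP HQ).
  apply: le_trans (SnM _ _) _; apply: ler_pM; [exact: Sn_ge0|exact: Sn_ge0| |exact: Gb].
  apply: le_trans (SnM _ _) _; rewrite Sn_tr; apply: ler_pM; [exact: Sn_ge0|exact: Sn_ge0|exact: Gb|exact: le_refl].
have Htr : `|\tr PP - \tr QQ| <= Sn (PP - QQ) by rewrite -raddfB; exact: tr_le_Sn.
set c1 := relaxed_cost _ _ _ _ _ _ _ (hmap A W k.+1 PP) in IH1 *.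
set c2 := relaxed_cost _ _ _ _ _ _ _ (hmap A W k.+1 QQ) in IH1 *.
have E : \tr PP + c1 - (\tr QQ + c2) = (\tr PP - \tr QQ) + (c1 - c2) by ring.
rewrite E; apply: le_trans (ler_normD _ _) _.
set d := Sn (PP - QQ) in Htr Sh SD *; set e := Sn (P - Q) in SD *.
have d0 : 0 <= d by exact: Sn_ge0.
have IH2 : `|c1 - c2| <= L' * (al * d * al).
  apply: le_trans IH1 _; apply: ler_wpM2l => //.
have : (1 + L' * (al * al)) * d <= (1 + L' * (al * al)) * (g * e * g).
  apply: ler_wpM2l => //; rewrite addr_ge0 // mulr_ge0 // mulr_ge0 //.
have -> : (1 + L' * (al * al)) * (g * e * g) = (1 + L' * (al * al)) * (g * g) * e by ring.
have E2 : L' * (al * d * al) = L' * (al * al) * d by ring.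
rewrite E2 in IH2; move=> H; apply: le_trans H; rewrite mulrDl mul1r.
by apply: lerD.
Qed.

Lemma cost_ge0 s : forall k theta M, good theta s k -> psd M ->
  0 <= relaxed_cost A W C V theta s k M.
Proof.
elim: s => [|s IH] k theta M Hg HM //=.
have Hk : (k <= k < k + s.+1)%N by rewrite leqnn /= addnS ltnS leq_addr.
have [psdR _ _] := Hg k Hk.
have good' : good theta s k.+1.
  move=> j /andP [h1 h2]; apply: Hg; rewrite (ltnW h1) /=.
  by rewrite addSn -addnS in h2.
rewrite -/(Rsum theta k); apply: addr_ge0.
  exact: psd_tr_ge0 (Phi_psd psdR HM).
apply: IH => //; rewrite /hmap /=; apply: psd_add => //; apply: psd_cong.
exact: Phi_psd.
Qed.

Lemma cost_lip_all S b : 0 <= b -> exists L, 0 <= L /\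
  forall s, (s <= S)%N -> forall k theta, good theta s k ->
  forall P Q, psd P -> psd Q -> Sn P <= b -> Sn Q <= b ->
  `|relaxed_cost A W C V theta s k P - relaxed_cost A W C V theta s k Q|
     <= L * Sn (P - Q).
Proof.
move=> b0; elim: S => [|S [L1 [L10 H1]]].
  have [L [L0 HL]] := cost_lip 0 b0; exists L; split => // s; rewrite leqn0 => /eqP ->.
  exact: HL.
have [L [L0 HL]] := cost_lip S.+1 b0; exists (L1 + L); split; first exact: addr_ge0.
move=> s; rewrite leq_eqVlt => /orP [/eqP ->|hs] k theta Hg P Q HP HQ SP SQ.
  apply: le_trans (HL k theta Hg P Q HP HQ SP SQ) _.
  by rewrite ler_wpM2r ?Sn_ge0 // lerDr.
apply: le_trans (H1 s hs k theta Hg P Q HP HQ SP SQ) _.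
by rewrite ler_wpM2r ?Sn_ge0 // lerDl.
Qed.
End Cost.

Local Open Scope classical_set_scope.
Lemma inf_lip (I : Type) (feas : I -> Prop) (f g : I -> R) (d : R) : 0 <= d ->
  (forall i, feas i -> 0 <= f i) -> (forall i, feas i -> 0 <= g i) ->
  (forall i, feas i -> `|f i - g i| <= d) ->
  `|inf [set c | exists i, feas i /\ c = f i] - inf [set c | exists i, feas i /\ c = g i]| <= d.
Proof.
move=> d0 f0 g0 H.
case: (pselect (exists i, feas i)) => [[i0 fi0]|nf]; last first.
  have E : forall h : I -> R, [set c | exists i, feas i /\ c = h i] = set0.
    move=> h; apply/seteqP; split => x //= [i [fi _]]; apply: nf; by exists i.
  by rewrite !E subrr normr0.
set SF := [set c | exists i, feas i /\ c = f i].
set SG := [set c | exists i, feas i /\ c = g i].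
have hF : has_lbound SF by exists 0 => x [i [fi ->]]; exact: f0.
have hG : has_lbound SG by exists 0 => x [i [fi ->]]; exact: g0.
have nF : nonempty SF by exists (f i0); exists i0.
have nG : nonempty SG by exists (g i0); exists i0.
have h1 : inf SF - d <= inf SG.
  apply: lb_le_inf => // x [i [fi ->]].
  have fiF : SF (f i) by exists i.
  have := ge_inf hF fiF; have := H i fi; rewrite ler_norml => /andP[? ?]; lra.
have h2 : inf SG - d <= inf SF.
  apply: lb_le_inf => // x [i [fi ->]].
  have giG : SG (g i) by exists i.
  have := ge_inf hG giG; have := H i fi; rewrite ler_norml => /andP[? ?]; lra.
rewrite ler_norml; apply/andP; split; lra.
Qed.

Lemma le_sum_ord (F : nat -> R) T j : (forall j, 0 <= F j) -> (j < T)%N ->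
  F j <= \sum_(j' < T) F j'.
Proof.
move=> F0 hj; rewrite (bigD1 (Ordinal hj)) //= lerDl; exact: sumr_ge0.
Qed.

Lemma psd_Rmat n N (m : 'I_N -> nat) (C : forall i : 'I_N, nat -> 'M[R]_(m i, n))
  (V : forall i : 'I_N, 'M[R]_(m i)) i k : posdef (V i) -> psd (Rmat C V i k).
Proof.
move=> HV; rewrite /Rmat -{2}(trmxK (C i k)); apply: psd_cong.
exact/psd_inv/posdef_psd.
Qed.

End Aux.

Theorem proposition4 (R : realType) (n N T : nat) (m : 'I_N -> nat)
  (A : nat -> 'M[R]_n) (W : 'M[R]_n)
  (C : forall i : 'I_N, nat -> 'M[R]_(m i, n)) (V : forall i : 'I_N, 'M[R]_(m i)) :
  posdef W -> (forall i, posdef (V i)) ->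
  forall B : R, 0 < B ->
  exists K : R, 0 < K /\
    forall t : nat, (t <= T)%N ->
    forall P Q : 'M[R]_n, psd P -> psd Q -> frob P <= B -> frob Q <= B ->
      `|Uo A W C V T t P - Uo A W C V T t Q| <= K * frob (P - Q).
Proof.
move=> HWp HV B B0.
have HW := posdef_psd HWp.
pose al := \sum_(j < T.+1) Sn (A j).
pose rho := \sum_(j < T.+1) \sum_(i < N) Sn (Rmat C V i j).
have al0 : 0 <= al by apply: sumr_ge0 => j _; exact: Sn_ge0.
have rho0 : 0 <= rho by apply: sumr_ge0 => j _; apply: sumr_ge0 => i _; exact: Sn_ge0.
pose b := (n * n)%:R * B.
have b0 : 0 <= b by rewrite mulr_ge0 // ltW.
have [L [L0 HL]] := cost_lip_all A C V HW al0 rho0 T.+1 b0.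
exists ((n * n)%:R * L + 1); split.
  by rewrite ltr_pwDr // mulr_ge0.
move=> t tT P Q HP HQ FP FQ.
have SnB : forall X : 'M[R]_n, frob X <= B -> Sn X <= b.
  move=> X FX; apply: le_trans (Sn_le_frob X) _; exact: ler_wpM2l.
have Hgood : forall theta, relaxed_schedule t T theta ->
    good A C V al rho theta (T.+1 - t) t.
  move=> theta Hs j /andP [h1 h2].
  have hj : (j < T.+1)%N by move: h2; rewrite subnKC // ltnW.
  have hj' : (t <= j <= T)%N by rewrite h1 -ltnS hj.
  have [Hth Hsum] := Hs j hj'.
  split.
  - apply: psd_sum => i _; apply: psd_scale; first by case/andP: (Hth i).
    exact: psd_Rmat.
  - apply: le_trans (Sn_sum _ _ _) _.
    have F0 : forall k, 0 <= \sum_(i < N) Sn (Rmat C V i k).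
      by move=> k; apply: sumr_ge0 => i _; exact: Sn_ge0.
    apply: le_trans _ (le_sum_ord F0 hj).
    apply: ler_sum => i _; rewrite SnZ.
    case/andP: (Hth i) => t0 t1; rewrite ger0_norm //.
    by rewrite ler_piMl ?Sn_ge0.
  - by apply: (le_sum_ord (F := fun j => Sn (A j))) => // k; exact: Sn_ge0.
rewrite /Uo.
apply: le_trans (inf_lip (d := L * Sn (P - Q)) _ _ _ _) _.
- by rewrite mulr_ge0 ?Sn_ge0.
- move=> theta Hs; apply: cost_ge0 => //; exact: Hgood.
- move=> theta Hs; apply: cost_ge0 => //; exact: Hgood.
- move=> theta Hs /=.
  exact: (HL _ (leq_subr _ _) _ _ (Hgood _ Hs) _ _ HP HQ (SnB _ FP) (SnB _ FQ)).
have f0 : 0 <= frob (P - Q) by apply: sqrtr_ge0.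
apply: le_trans (ler_wpM2l L0 (Sn_le_frob (P - Q))) _.
rewrite mulrA mulrDl mul1r [L * _]mulrC lerDl //.
Qed.
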